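(* An ordering of the features by modification cost does not in general determine which recourse is ideal. Precisely: there exist - a finite feature set $\mathcal{F}$, - a finite set $\mathcal{R}$ of pairwise disjoint nonempty recourses $R\subseteq\mathcal{F}$, - a recourse $R\in\mathcal{R}$, and - two strength assignments $\beta,\beta':\mathcal{F}\to\mathbb{R}$ that induce the same ordering of $\mathcal{F}$ (that is, $\beta_f<\beta_g \iff \beta'_f<\beta'_g$ for all $f,g\in\mathcal{F}$), such that $R$ is ideal with respect to $\mathcal{R}$ under $\beta$ but not ideal with respect to $\mathcal{R}$ under $\beta'$.
   Context: Let $\mathcal{F}$ be a finite set of features. A strength assignment is a function $\beta:\mathcal{F}\to\mathbb{R}$, written $f\mapsto\beta_f$. The cost of modifying feature $f$ is $\mathrm{Cost}(f)=-\beta_f$. For distinct $f,g\in\mathcal{F}$, the probability that $f$ is easier to modify than $g$ is given by the Bradley–Terry model: $$p_{f>g}=\frac{e^{\beta_f}}{e^{\beta_f}+e^{\beta_g}}.$$ A recourse is a nonempty subset $R\subseteq\mathcal{F}$ (the set of features it modifies). For disjoint recourses $R_1,R_2$ with $|R_1|=m$ and $|R_2|=n$, the probability that $R_1$ is easier to implement than $R_2$ is $$\rho_{R_1>R_2}=\frac{1}{mn}\sum_{f\in R_1,\,g\in R_2}p_{f>g}.$$ Given a finite set $\mathcal{R}$ of pairwise disjoint candidate recourses (for the same data instance) and $R\in\mathcal{R}$, $R$ is ideal with respect to $\mathcal{R}$ under $\beta$ if there is no $R'\in\mathcal{R}\setminus\{R\}$ with $\rho_{R>R'}<\rho_{R'>R}$.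 Otherwise $R$ is non-ideal. *)

(* Defs.v *)
From HB Require Import structures.
From mathcomp Require Import all_boot all_order all_algebra.
From mathcomp Require Import Rstruct.
From Stdlib Require Import Reals.
Set Implicit Arguments. Unset Strict Implicit. Unset Printing Implicit Defensive.
Import Order.TTheory GRing.Theory Num.Theory.
Local Open Scope ring_scope.

(* Bradley--Terry probability that f is easier to modify than g under beta. *)
Definition pBT (F : finType) (beta : F -> R) (f g : F) : R :=
  exp (beta f) / (exp (beta f) + exp (beta g)).

Definition rhoR (F : finType) (beta : F -> R) (R1 R2 : {set F}) : R :=
  (\sum_(f in R1) \sum_(g in R2) pBT beta f g) / (#|R1|%:R * #|R2|%:R).

Definition ideal (F : finType) (beta : F -> R) (Rs : {set {set F}}) (R0 : {set F}) : Prop :=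
  ~ (exists R', R' \in Rs /\ R' != R0 /\ rhoR beta R0 R' < rhoR beta R' R0).

(* Main.v *)
Require Import Defs.
From HB Require Import structures.
From mathcomp Require Import all_boot all_order all_algebra.
From mathcomp Require Import Rstruct.
From Stdlib Require Import Reals.
From mathcomp Require Import ring lra.
Import Order.TTheory GRing.Theory Num.Theory.
Local Open Scope ring_scope.

Section H.
Variable (F : finType) (x : F -> R).
Hypothesis xpos : forall i, 0 < x i.
Let beta := fun i => ln (x i).

Lemma pBT_ln f g : pBT beta f g = x f / (x f + x g).
Proof.
rewrite /pBT /beta !exp_ln //; apply/RltP; exact: xpos.
Qed.

Lemma rho12 i j k : j != k ->
  rhoR beta [set i] [set j; k] = (x i / (x i + x j) + x i / (x i + x k)) / 2.
Proof.
move=> njk; rewrite /rhoR big_set1 cards1 cards2 njk.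
rewrite big_setU1 ?inE // big_set1 !pBT_ln.
congr (_ / _); rewrite /= ?mul1r ?mulr1 //; first [exact: mul1r | exact: mulr1 | exact: Rmult_1_l | exact: Rmult_1_r].
Qed.

Lemma rho21 i j k : j != k ->
  rhoR beta [set j; k] [set i] = (x j / (x j + x i) + x k / (x k + x i)) / 2.
Proof.
move=> njk; rewrite /rhoR cards1 cards2 njk.
rewrite big_setU1 ?inE // big_set1 !big_set1 !pBT_ln.
congr (_ / _); rewrite /= ?mul1r ?mulr1 //; first [exact: mul1r | exact: mulr1 | exact: Rmult_1_l | exact: Rmult_1_r].
Qed.
End H.

Definition xa (i : 'I_3) : R := if val i == 0%N then 1 else if val i == 1%N then 2 else 1/4.
Definition xb (i : 'I_3) : R := if val i == 0%N then 1 else if val i == 1%N then 4 else 1/2.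

Lemma xa_pos i : 0 < xa i.
Proof. rewrite /xa; case: ifP => _; [|case: ifP => _]; lra. Qed.
Lemma xb_pos i : 0 < xb i.
Proof. rewrite /xb; case: ifP => _; [|case: ifP => _]; lra. Qed.

Lemma numA (F : realFieldType) (a b c : F) : a = 1 -> b = 2 -> c = 1/4 ->
  ~ ((a/(a+b) + a/(a+c))/2 < (b/(b+a) + c/(c+a))/2).
Proof.
move=> -> -> ->.
have -> : (1:F)/(1+2) = 1/3.
  by field.
have -> : (1:F)/(1+1/4) = 4/5 by field.
have -> : (2:F)/(2+1) = 2/3 by field.
have -> : (1/4:F)/(1/4+1) = 1/5 by field.
lra.
Qed.

Lemma numB (F : realFieldType) (a b c : F) : a = 1 -> b = 4 -> c = 1/2 ->
  ((a/(a+b) + a/(a+c))/2 < (b/(b+a) + c/(c+a))/2).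
Proof.
move=> -> -> ->.
have -> : (1:F)/(1+4) = 1/5 by field.
have -> : (1:F)/(1+1/2) = 2/3 by field.
have -> : (4:F)/(4+1) = 4/5 by field.
have -> : (1/2:F)/(1/2+1) = 1/3 by field.
lra.
Qed.

Theorem theorem1 :
  exists (F : finType) (Rs : {set {set F}}) (R0 : {set F}) (beta beta' : F -> R),
    (forall R1, R1 \in Rs -> R1 != set0) /\
    (forall R1 R2, R1 \in Rs -> R2 \in Rs -> R1 != R2 -> [disjoint R1 & R2]) /\
    R0 \in Rs /\
    (forall f g : F, beta f < beta g <-> beta' f < beta' g) /\
    ideal beta Rs R0 /\ ~ ideal beta' Rs R0.
Proof.
pose i0 : 'I_3 := inord 0. pose i1 : 'I_3 := inord 1. pose i2 : 'I_3 := inord 2.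
have n12 : i1 != i2 by apply/eqP => /(congr1 val); rewrite /= !inordK.
have nAB : [set i0] != [set i1; i2].
  apply/eqP => /setP /(_ i0); rewrite !inE.
  by rewrite /i0 /i1 /i2 -!val_eqE /= !inordK.
exists 'I_3, [set [set i0]; [set i1; i2]], [set i0],
  (fun i => ln (xa i)), (fun i => ln (xb i)).
split; first by move=> R1; rewrite !inE => /orP [] /eqP ->; apply/set0Pn;
  [exists i0 | exists i1]; rewrite !inE ?eqxx.
split.
  move=> R1 R2; rewrite !inE => /orP [] /eqP -> /orP [] /eqP -> //;
  rewrite ?eqxx // => _; apply/pred0P => z /=; rewrite !inE /i0 /i1 /i2 -!val_eqE /= !inordK //;
  by case: z => [[|[|[|?]]] ?].
split; first by rewrite !inE eqxx.
split.
  move=> f g; have lnP : forall a b : R, 0 < a -> 0 < b -> (ln a < ln b) = (a < b).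
    move=> a b /RltP ha /RltP hb; apply/idP/idP => /RltP h; apply/RltP.
    - exact: ln_lt_inv.
    - exact: ln_increasing.
  rewrite !lnP ?xa_pos ?xb_pos //.
  case: f => [[|[|[|f]]] Hf] //; case: g => [[|[|[|g]]] Hg] //;
  rewrite /xa /xb /=; split => /= H; lra.
have xa0 : xa i0 = 1 by rewrite /xa /i0 /= inordK.
have xa1 : xa i1 = 2 by rewrite /xa /i1 /= inordK.
have xa2 : xa i2 = 1/4 by rewrite /xa /i2 /= inordK.
have xb0 : xb i0 = 1 by rewrite /xb /i0 /= inordK.
have xb1 : xb i1 = 4 by rewrite /xb /i1 /= inordK.
have xb2 : xb i2 = 1/2 by rewrite /xb /i2 /= inordK.
split.
  move=> [R' [HR' [Hne Hlt]]].
  move: HR'; rewrite !inE => /orP [] /eqP HR'; subst R'; first by rewrite eqxx in Hne.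
  move: Hlt; rewrite (@rho12 _ _ xa_pos) // (@rho21 _ _ xa_pos) //.
  exact: (@numA R _ _ _ xa0 xa1 xa2).
move=> Hid; apply: Hid; exists [set i1; i2]; split; first by rewrite !inE eqxx orbT.
split; first by rewrite eq_sym.
rewrite (@rho12 _ _ xb_pos) // (@rho21 _ _ xb_pos) //.
exact: (@numB R _ _ _ xb0 xb1 xb2).
Qed.
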